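(* Let $\{a_n\}_{n\in\mathbb{N}}\subset\mathbb{R}$ be a sequence satisfying $$|a_{n+m}|\le|a_n+a_m|\quad\text{for all } n,m\in\mathbb{N} \text{ with } \tfrac12 n\le m\le 2n.$$ Then the limit $\lim_{n\to\infty}\frac{a_n}{n}$ exists and belongs to $\mathbb{R}$.
   Context: $\mathbb{N}=\{1,2,3,\dots\}$. *)

(* Defs.v *)
From Stdlib Require Import Reals.
Open Scope R_scope.

(* Main.v *)
Require Import Defs.
From Stdlib Require Import Reals Lra Lia Psatz Arith.
Open Scope R_scope.

Section S.
Variable b : nat -> R.
Hypothesis hb : forall n m : nat, (1 <= n)%nat -> (1 <= m)%nat ->
        (n <= 2 * m)%nat -> (m <= 2 * n)%nat -> b (n + m)%nat <= b n + b m.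

Hypothesis bpos : forall n, 0 <= b n.

Lemma split_bound (N : nat) (HN : (1 <= N)%nat) : forall k r, (1 <= k)%nat -> (r < N)%nat ->
  b (k * N + r)%nat <= INR (k - 1) * b N + b (N + r)%nat.
Proof.
  intro k. induction k as [k IH] using lt_wf_ind. intros r Hk Hr.
  destruct (Nat.eq_dec k 1) as [->|Hk1].
  { replace (1 * N + r)%nat with (N + r)%nat by lia. simpl. lra. }
  destruct (Nat.Even_or_Odd k) as [[j Hj]|[j Hj]].
  - assert (Hj1 : (1 <= j)%nat) by lia.
    assert (HjN : (N <= j * N)%nat) by nia.
    assert (E : (k * N + r = (j * N + r) + j * N)%nat) by (subst k; ring).
    rewrite E.
    pose proof (hb (j * N + r) (j * N)) as H.
    assert (H1 : b (j * N + r)%nat <= INR (j - 1) * b N + b (N + r)%nat) by (apply IH; lia).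
    assert (H2 : b (j * N + 0)%nat <= INR (j - 1) * b N + b (N + 0)%nat) by (apply IH; lia).
    rewrite !Nat.add_0_r in H2.
    assert (EI : INR (k - 1) = INR (j - 1) + INR j).
    { rewrite <- plus_INR. f_equal. lia. }
    assert (EJ : INR j = INR (j - 1) + 1).
    { rewrite <- S_INR. f_equal. lia. }
    rewrite EI, EJ.
    assert (H3 : b (j * N + r + j * N)%nat <= b (j * N + r)%nat + b (j * N)%nat) by (apply H; nia).
    nra.
  - assert (Hj1 : (1 <= j)%nat) by lia.
    assert (HjN : (N <= j * N)%nat) by nia.
    assert (E : (k * N + r = (j * N + r) + (j + 1) * N)%nat) by (subst k; ring).
    rewrite E.
    pose proof (hb (j * N + r) ((j + 1) * N)) as H.
    assert (H1 : b (j * N + r)%nat <= INR (j - 1) * b N + b (N + r)%nat) by (apply IH; lia).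
    assert (H2 : b ((j + 1) * N + 0)%nat <= INR (j + 1 - 1) * b N + b (N + 0)%nat) by (apply IH; lia).
    rewrite !Nat.add_0_r in H2.
    assert (EI : INR (k - 1) = INR (j - 1) + INR (j + 1 - 1) + 1).
    { rewrite <- plus_INR, <- S_INR. f_equal. lia. }
    pose proof (bpos N).
    assert (EJ : INR (j + 1 - 1) = INR (j - 1) + 1).
    { rewrite <- S_INR. f_equal. lia. }
    rewrite EI. rewrite EJ in H2 |- *.
    assert (H3 : b (j * N + r + (j + 1) * N)%nat <= b (j * N + r)%nat + b ((j + 1) * N)%nat) by (apply H; nia).
    nra.
Qed.


Lemma crude n : (1 <= n)%nat -> b n <= INR n * b 1%nat.
Proof.
  intro Hn. pose proof (split_bound 1 (le_n 1) n 0 Hn ltac:(lia)) as H.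
  replace (n * 1 + 0)%nat with n in H by lia.
  replace (INR n) with (INR (n - 1) + 1). simpl in H. lra.
  rewrite <- S_INR. f_equal. lia.
Qed.

Lemma ybound N n : (1 <= N)%nat -> (N <= n)%nat ->
  b n / INR n <= b N / INR N + 2 * INR N * b 1%nat / INR n.
Proof.
  intros HN Hn.
  pose proof (Nat.div_mod n N ltac:(lia)) as Hd.
  pose proof (Nat.mod_upper_bound n N ltac:(lia)) as Hr.
  set (k := (n / N)%nat) in *. set (r := (n mod N)%nat) in *.
  assert (Hk : (1 <= k)%nat).
  { destruct k; [|lia]. lia. }
  pose proof (split_bound N HN k r Hk Hr) as H.
  replace (k * N + r)%nat with n in H by lia.
  pose proof (crude (N + r) ltac:(lia)) as C.
  assert (HNr : INR (N + r) <= 2 * INR N).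
  { replace (2 * INR N) with (INR (2 * N)) by (rewrite mult_INR; simpl; ring).
    apply le_INR. lia. }
  assert (Hkn : INR k * INR N <= INR n).
  { rewrite <- mult_INR. apply le_INR. lia. }
  assert (Hk1 : INR (k - 1) <= INR k) by (apply le_INR; lia).
  assert (HNp : 0 < INR N) by (apply lt_0_INR; lia).
  assert (Hnp : 0 < INR n) by (apply lt_0_INR; lia).
  pose proof (bpos N). pose proof (bpos 1%nat).
  assert (b n <= INR n * (b N / INR N) + 2 * INR N * b 1%nat).
  { assert (INR (k - 1) * b N <= INR n * (b N / INR N)).
    { apply Rle_trans with (INR k * b N). nra.
      replace (INR k * b N) with ((INR k * INR N) * (b N / INR N)) by (field; lra).
      apply Rmult_le_compat_r. apply Rle_mult_inv_pos; lra. lra. }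
    nra. }
  apply Rmult_le_reg_r with (INR n). lra.
  replace ((b N / INR N + 2 * INR N * b 1%nat / INR n) * INR n)
    with (INR n * (b N / INR N) + 2 * INR N * b 1%nat) by (field; lra).
  replace (b n / INR n * INR n) with (b n) by (field; lra). lra.
Qed.

Lemma ylim : exists l, 0 <= l /\ (forall N, (1 <= N)%nat -> l <= b N / INR N) /\
  Un_cv (fun k => b (S k) / INR (S k)) l.
Proof.
  set (E := fun x => exists N, (1 <= N)%nat /\ x = - (b N / INR N)).
  assert (HB : bound E).
  { exists 0. intros x [N [HN ->]].
    assert (0 < INR N) by (apply lt_0_INR; lia).
    pose proof (bpos N).
    assert (0 <= b N / INR N) by (apply Rle_mult_inv_pos; lra). lra. }
  assert (HE : exists x, E x) by (exists (- (b 1%nat / INR 1)); exists 1%nat; split; auto).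
  destruct (completeness E HB HE) as [m [Hub Hlub]].
  assert (Hl : forall N, (1 <= N)%nat -> - m <= b N / INR N).
  { intros N HN. assert (E (- (b N / INR N))) by (exists N; auto).
    pose proof (Hub _ H). lra. }
  exists (- m). split; [|split; [exact Hl|]].
  { enough (m <= 0) by lra. apply Hlub. intros x [N [HN ->]].
    assert (0 < INR N) by (apply lt_0_INR; lia).
    pose proof (bpos N).
    assert (0 <= b N / INR N) by (apply Rle_mult_inv_pos; lra). lra. }
  intros eps Heps.
  assert (HN : exists N, (1 <= N)%nat /\ b N / INR N < - m + eps / 2).
  { apply Classical_Prop.NNPP. intro Hn.
    assert (is_upper_bound E (m - eps / 2)).
    { intros x [N [HN ->]].
      destruct (Rle_dec (- (b N / INR N)) (m - eps / 2)) as [h|h]; [exact h|].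
      exfalso. apply Hn. exists N. split; auto. lra. }
    pose proof (Hlub _ H). lra. }
  destruct HN as [N [HN HNl]].
  pose proof (bpos 1%nat).
  assert (HNp : 0 < INR N) by (apply lt_0_INR; lia).
  destruct (archimed (4 * INR N * b 1%nat / eps)) as [Ha _].
  destruct (INR_unbounded (Rmax (INR N) (4 * INR N * b 1%nat / eps))) as [M HM].
  exists M. intros n Hn. unfold R_dist.
  assert (HSn : INR M <= INR (S n)) by (apply le_INR; lia).
  assert (HSp : 0 < INR (S n)) by (apply lt_0_INR; lia).
  assert (HNn : (N <= S n)%nat).
  { apply INR_le. pose proof (Rmax_l (INR N) (4 * INR N * b 1%nat / eps)). lra. }
  pose proof (ybound N (S n) HN HNn) as Y.
  pose proof (Hl (S n) ltac:(lia)) as L.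
  assert (2 * INR N * b 1%nat / INR (S n) <= eps / 2).
  { pose proof (Rmax_r (INR N) (4 * INR N * b 1%nat / eps)).
    apply Rmult_le_reg_r with (INR (S n)). lra.
    replace (2 * INR N * b 1%nat / INR (S n) * INR (S n)) with (2 * INR N * b 1%nat) by (field; lra).
    assert (4 * INR N * b 1%nat / eps * eps = 4 * INR N * b 1%nat) by (field; lra).
    nra. }
  rewrite Rabs_right; lra.
Qed.

End S.

Lemma opp_sign_bound p q : p * q <= 0 -> Rabs (p + q) <= Rmax (Rabs p) (Rabs q).
Proof.
  intro H. unfold Rmax. destruct (Rle_dec (Rabs p) (Rabs q)) as [h|h];
  revert h; unfold Rabs;
  repeat match goal with |- context[Rcase_abs ?x] => destruct (Rcase_abs x) end; nra.
Qed.

Theorem mainTheorem5 (a : nat -> R)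
  (ha : forall n m : nat, (1 <= n)%nat -> (1 <= m)%nat ->
        (n <= 2 * m)%nat -> (m <= 2 * n)%nat ->
        Rabs (a (n + m)%nat) <= Rabs (a n + a m)) :
  exists L : R, Un_cv (fun k : nat => a (S k) / INR (S k)) L.
Proof.
  assert (hb : forall n m : nat, (1 <= n)%nat -> (1 <= m)%nat ->
        (n <= 2 * m)%nat -> (m <= 2 * n)%nat ->
        Rabs (a (n + m)%nat) <= Rabs (a n) + Rabs (a m)).
  { intros. eapply Rle_trans. apply ha; auto. apply Rabs_triang. }
  destruct (ylim (fun n => Rabs (a n)) hb (fun n => Rabs_pos _)) as [l [Hl0 [_ Hcv]]].
  assert (Hdiv : forall k, Rabs (a (S k)) / INR (S k) = Rabs (a (S k) / INR (S k))).
  { intro k. unfold Rdiv. rewrite Rabs_mult, Rabs_inv.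
    rewrite (Rabs_right (INR (S k))). auto. apply Rle_ge, pos_INR. }
  destruct (Req_dec l 0) as [Hz|Hz].
  { subst l. exists 0. intros eps Heps. destruct (Hcv eps Heps) as [M HM].
    exists M. intros n Hn. specialize (HM n Hn). unfold R_dist in *.
    rewrite Rminus_0_r in *. rewrite <- Hdiv. rewrite Rabs_right in HM. 2: {
      apply Rle_ge, Rle_mult_inv_pos. apply Rabs_pos. apply lt_0_INR; lia. }
    exact HM. }
  assert (Hlp : 0 < l) by lra.
  destruct (Hcv (l / 4) ltac:(lra)) as [M0 HM0].
  assert (Hb : forall k, (k >= M0)%nat ->
     3 * l / 4 * INR (S k) < Rabs (a (S k)) < 5 * l / 4 * INR (S k)).
  { intros k Hk. specialize (HM0 k Hk). unfold R_dist in HM0.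
    assert (HS : 0 < INR (S k)) by (apply lt_0_INR; lia).
    apply Rabs_def2 in HM0. destruct HM0 as [h1 h2].
    set (y := Rabs (a (S k))) in *.
    assert (y = (y / INR (S k)) * INR (S k)) by (field; lra).
    split; nra. }
  set (M := (M0 + 3)%nat).
  assert (Hsg : forall k, (k >= M)%nat -> 0 < a (S k) * a (S (S k))).
  { intros k Hk. apply Rnot_le_lt. intro Hneg.
    pose proof (opp_sign_bound _ _ Hneg) as Hob.
    pose proof (ha (S k) (S (S k)) ltac:(lia) ltac:(lia) ltac:(lia) ltac:(lia)) as Hh.
    replace (S k + S (S k))%nat with (S (S (2 * k + 1)))%nat in Hh by lia.
    pose proof (Hb (S (2 * k + 1)) ltac:(lia)) as B1.
    pose proof (Hb k ltac:(lia)) as B2.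
    pose proof (Hb (S k) ltac:(lia)) as B3.
    assert (HkR : 3 <= INR k).
    { replace 3 with (INR 3) by (simpl; ring). apply le_INR. lia. }
    rewrite !S_INR, plus_INR, mult_INR in *. simpl (INR 1) in *. simpl (INR 2) in *.
    unfold Rmax in Hob. destruct Rle_dec in Hob; nra. }
  assert (Hsame : forall j, 0 < a (S M) * a (S (M + j))).
  { induction j.
    - rewrite Nat.add_0_r. pose proof (Hsg M (le_n _)). nra.
    - pose proof (Hsg (M + j)%nat ltac:(lia)) as h.
      replace (M + S j)%nat with (S (M + j)) by lia.
      assert (0 < (a (S M) * a (S (M + j))) * (a (S (M + j)) * a (S (S (M + j)))))
        by (apply Rmul_lt_0_compat || apply Rmult_lt_0_compat; lra).
      assert (0 < a (S (M + j)) * a (S (M + j))) by nra.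
      nra. }
  set (s := if Rlt_dec 0 (a (S M)) then 1 else -1).
  assert (Hs : forall k, (k >= M)%nat -> a (S k) = s * Rabs (a (S k))).
  { intros k Hk. pose proof (Hsame (k - M)%nat) as h.
    replace (M + (k - M))%nat with k in h by lia.
    unfold s. destruct Rlt_dec; unfold Rabs; destruct Rcase_abs; nra. }
  exists (s * l). intros eps Heps.
  assert (Hs1 : Rabs s = 1) by (unfold s; destruct Rlt_dec; unfold Rabs; repeat match goal with |- context[Rcase_abs ?x] => destruct (Rcase_abs x) end; lra).
  destruct (Hcv eps Heps) as [M1 HM1].
  exists (Nat.max M M1). intros n Hn.
  specialize (HM1 n ltac:(lia)). unfold R_dist in *.
  rewrite (Hs n ltac:(lia)).
  replace (s * Rabs (a (S n)) / INR (S n) - s * l)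
     with (s * (Rabs (a (S n)) / INR (S n) - l)) by (field; apply not_0_INR; lia).
  rewrite Rabs_mult, Hs1. lra.
Qed.
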